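(* Let $n\ge 5$ and let $G\in \Theta_n$. (1) $\mathrm{irr}_t(G)\ge 2n-4$. Equality holds if and only if the degree sequence of $G$ is $(3,3,2,\ldots,2)$, i.e. two vertices of degree $3$ and $n-2$ vertices of degree $2$. (2) If the degree sequence of $G$ is not $(3,3,2,\ldots,2)$, then $\mathrm{irr}_t(G)\ge 4n-10$. Equality holds if and only if the degree sequence of $G$ is $(3,3,3,2,\ldots,2,1)$, i.e. three vertices of degree $3$, $n-4$ vertices of degree $2$ and one vertex of degree $1$.
   Context: A bicyclic graph is a simple connected graph whose number of edges equals its number of vertices plus one. For a graph $G=(V,E)$ and $w\in V$, $d_G(w)$ is the degree of $w$. The total irregularity is $\mathrm{irr}_t(G)=\frac12\sum_{x,y\in V}|d_G(x)-d_G(y)|$, where the sum runs over all ordered pairs of vertices. Degree sequences are listed in nonincreasing order. For $p,q\ge 3$ and $l\ge 2$, the $\Theta$-graph $\theta(p,q,l)$ is the graph on $p+q-l$ vertices consisting of two cycles $C_p$ and $C_q$ that have exactly $l$ common vertices, forming a common path. Equivalently, it consists of two vertices joined by three internally disjoint paths. $\Theta_n$ denotes the set of bicyclic graphs on $n$ vertices obtained from some $\theta(p,q,l)$ by attaching trees. *)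

(* Defs.v *)
From mathcomp Require Import all_boot.
Set Implicit Arguments. Unset Strict Implicit. Unset Printing Implicit Defensive.

Definition simple_graph (n : nat) (e : rel 'I_n) : Prop :=
  symmetric e /\ irreflexive e.

Definition deg (n : nat) (e : rel 'I_n) (x : 'I_n) : nat := #|[set y | e x y]|.

Definition nedges (n : nat) (e : rel 'I_n) : nat :=
  #|[set p : 'I_n * 'I_n | e p.1 p.2 & (p.1 < p.2)%N]|.

Definition connected (n : nat) (e : rel 'I_n) : Prop :=
  forall x y : 'I_n, connect e x y.

Definition bicyclic (n : nat) (e : rel 'I_n) : Prop :=
  simple_graph e /\ connected e /\ nedges e = n.+1.

(* [u] and [v] joined by the path u, p, v (p = list of interior vertices) *)
Definition upath (n : nat) (e : rel 'I_n) (u v : 'I_n) (p : seq 'I_n) : bool :=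
  path e u (rcons p v).

(* G contains a Theta-subgraph theta(p,q,l): two distinct vertices u, v joined
   by three internally disjoint paths, at most one of which is a single edge. *)
Definition has_theta (n : nat) (e : rel 'I_n) : Prop :=
  exists (u v : 'I_n) (p1 p2 p3 : seq 'I_n),
    [/\ u != v, upath e u v p1 && upath e u v p2 && upath e u v p3,
        uniq (u :: v :: p1 ++ p2 ++ p3) & (p2 != [::]) && (p3 != [::])].

(* Theta_n: bicyclic graphs obtained from some theta(p,q,l) by attaching trees,
   i.e. bicyclic graphs containing a theta subgraph. *)
Definition in_Theta (n : nat) (e : rel 'I_n) : Prop :=
  bicyclic e /\ has_theta e.

Definition irr_t (n : nat) (e : rel 'I_n) : nat :=
  (\sum_(x : 'I_n) \sum_(y : 'I_n)
      (maxn (deg e x) (deg e y) - minn (deg e x) (deg e y))) %/ 2.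

Definition degseq (n : nat) (e : rel 'I_n) : seq nat :=
  sort geq [seq deg e x | x <- enum 'I_n].

(* Main.v *)
Require Import Defs.
From mathcomp Require Import all_boot zify.
Set Implicit Arguments. Unset Strict Implicit.
Definition cnt n (f : 'I_n -> nat) i := \sum_(y : 'I_n) ((f y == i) : nat).

Lemma L3 n (f : 'I_n -> nat) (G : nat -> nat) :
  (forall y, 1 <= f y <= 3) ->
  \sum_(y : 'I_n) G (f y) = G 1 * cnt f 1 + G 2 * cnt f 2 + G 3 * cnt f 3.
Proof.
move=> H.
rewrite (eq_bigr (fun y => G 1 * (f y == 1) + G 2 * (f y == 2) + G 3 * (f y == 3))).
  by rewrite !big_split /= -!big_distrr.
move=> y _; have := H y; case: (f y) => [|[|[|[|m]]]] //= _; lia.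
Qed.

Lemma sum_ge_pt n (F : 'I_n -> nat) y : F y <= \sum_(x : 'I_n) F x.
Proof. by rewrite (bigD1 y) //= leq_addr. Qed.

Lemma S1_val n (t : 'I_n -> nat) : (forall y, 1 <= t y <= 3) ->
  \sum_(x : 'I_n) \sum_(y : 'I_n) (maxn (t x) (t y) - minn (t x) (t y)) =
  2 * (cnt t 1 * cnt t 2 + 2 * cnt t 1 * cnt t 3 + cnt t 2 * cnt t 3).
Proof.
move=> H.
rewrite (eq_bigr (fun x => (maxn (t x) 1 - minn (t x) 1) * cnt t 1 +
   (maxn (t x) 2 - minn (t x) 2) * cnt t 2 + (maxn (t x) 3 - minn (t x) 3) * cnt t 3)).
  rewrite (L3 (fun u => (maxn u 1 - minn u 1) * cnt t 1 +
   (maxn u 2 - minn u 2) * cnt t 2 + (maxn u 3 - minn u 3) * cnt t 3)) //.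
  rewrite /=. lia.
move=> x _; exact: (L3 (fun v => maxn (t x) v - minn (t x) v)).
Qed.

Lemma S2_ge n (g : 'I_n -> nat) :
  2 * ((\sum_(y : 'I_n) g y) * \sum_(y : 'I_n) ((g y == 0) : nat)) <=
  \sum_(x : 'I_n) \sum_(y : 'I_n) (maxn (g x) (g y) - minn (g x) (g y)).
Proof.
apply: (@leq_trans (\sum_(x : 'I_n) \sum_(y : 'I_n) (g x * (g y == 0) + g y * (g x == 0)))).
  rewrite [X in _ <= X](eq_bigr (fun x => g x * \sum_(y : 'I_n) ((g y == 0) : nat) + (g x == 0) * \sum_(y : 'I_n) g y)).
    rewrite big_split /= -!big_distrl /=. lia.
  move=> x _; rewrite big_split /= big_distrr /= big_distrr /=; congr (_ + _).
  by apply: eq_bigr => y _; rewrite mulnC.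
apply: leq_sum => x _; apply: leq_sum => y _.
case: (g x) => [|a]; case: (g y) => [|c] /=; lia.
Qed.

Lemma S2_0 n (g : 'I_n -> nat) : \sum_(y : 'I_n) g y = 0 ->
  \sum_(x : 'I_n) \sum_(y : 'I_n) (maxn (g x) (g y) - minn (g x) (g y)) = 0.
Proof.
move=> H; have g0 : forall y, g y = 0.
  by move=> y; have := sum_ge_pt g y; rewrite H; lia.
by apply: big1 => x _; apply: big1 => y _; rewrite !g0.
Qed.

Lemma deg_sum n (e : rel 'I_n) x : deg e x = \sum_(y : 'I_n) (e x y : nat).
Proof.
rewrite /deg -sum1_card big_mkcond /=; apply: eq_bigr => y _; rewrite inE.
by case: (e x y).
Qed.

Lemma nedges_sum n (e : rel 'I_n) :
  nedges e = \sum_(x : 'I_n) \sum_(y : 'I_n) ((e x y && (x < y)) : nat).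
Proof.
rewrite /nedges -sum1_card pair_big big_mkcond /=; apply: eq_bigr => p _.
by rewrite inE; case: (_ && _).
Qed.

Lemma handshake n (e : rel 'I_n) : simple_graph e ->
  \sum_(x : 'I_n) deg e x = 2 * nedges e.
Proof.
move=> [sym irr].
rewrite (eq_bigr (fun x => \sum_(y : 'I_n) (((e x y && (x < y)) : nat) + ((e y x && (y < x)) : nat)))).
  rewrite (eq_bigr (fun x => \sum_(y : 'I_n) ((e x y && (x < y)) : nat) +
                              \sum_(y : 'I_n) ((e y x && (y < x)) : nat))); last first.
    by move=> x _; rewrite big_split.
  rewrite big_split /= [X in _ + X = _]exchange_big /= nedges_sum mul2n -addnn; congr (_ + _); apply: eq_bigr => i _; apply: eq_bigr => j _.
move=> x _; rewrite deg_sum; apply: eq_bigr => y _.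
rewrite (sym y x).
case exy: (e x y) => //=.
case: (ltngtP x y) => //= Hxy.
have xy : x = y by apply: val_inj.
by move: exy; rewrite xy irr.
Qed.

Lemma deg_ge1 n (e : rel 'I_n) x : 2 <= n -> connected e -> 1 <= deg e x.
Proof.
case: n e x => [|n'] e x n2 con; first by [].
pose y : 'I_n'.+1 := inord (if val x == 0 then 1 else 0).
have xy : x != y.
  apply/negP => /eqP/(congr1 val); rewrite /y /= inordK; last by case: (val x == 0); lia.
  by case: eqP => /= H; lia.
have := con x y => /connectP [p pth ylast].
case: p pth ylast => [|z p] /=.
  by move=> _ E; move: xy; rewrite E eqxx.
move=> /andP [exz _] _.
apply/card_gt0P; exists z; by rewrite inE.
Qed.

Lemma uniq3 (T : eqType) (s1 s2 s3 : seq T) x1 x2 x3 :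
  uniq (s1 ++ s2 ++ s3) -> x1 \in s1 -> x2 \in s2 -> x3 \in s3 ->
  uniq [:: x1; x2; x3].
Proof.
rewrite !cat_uniq => /and3P [_ h1 /and3P [_ h2 _]] m1 m2 m3 /=.
rewrite !inE andbT.
have n12 : x1 != x2.
  apply/negP => /eqP E; move/negP: h1; apply; apply/hasP; exists x2.
    by rewrite mem_cat m2.
  by rewrite /= -E.
have n13 : x1 != x3.
  apply/negP => /eqP E; move/negP: h1; apply; apply/hasP; exists x3.
    by rewrite mem_cat m3 orbT.
  by rewrite /= -E.
have n23 : x2 != x3.
  apply/negP => /eqP E; move/negP: h2; apply; apply/hasP; exists x3.
    by [].
  by rewrite /= -E.
by rewrite negb_or n12 n13 n23.
Qed.

Lemma deg_ge3 n (e : rel 'I_n) u a b c :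
  uniq [:: a; b; c] -> e u a -> e u b -> e u c -> 3 <= deg e u.
Proof.
move=> U ha hb hc; rewrite /deg cardE.
have -> : 3 = size [:: a; b; c] by [].
apply: uniq_leq_size => // x; rewrite !inE => /or3P [] /eqP ->;
  by rewrite mem_enum inE.
Qed.

Lemma upath_head n (e : rel 'I_n) u v p : upath e u v p -> e u (head v p).
Proof. by rewrite /upath; case: p => [|a p] /= /andP []. Qed.

Lemma upath_last n (e : rel 'I_n) u v p : symmetric e -> upath e u v p -> e v (last u p).
Proof. by move=> sym; rewrite /upath rcons_path sym => /andP []. Qed.

Lemma mem_head' (T : eqType) (v : T) p : head v p \in v :: p.
Proof. by case: p => [|a p]; rewrite /= !inE eqxx ?orbT. Qed.

Lemma head_in (T : eqType) (v : T) p : p != [::] -> head v p \in p.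
Proof. by case: p => [|a p] //= _; rewrite inE eqxx. Qed.

Lemma last_in (T : eqType) (v : T) p : p != [::] -> last v p \in p.
Proof. by case: p => [|a p] //= _; apply: mem_last. Qed.

Lemma theta_deg n (e : rel 'I_n) : simple_graph e -> has_theta e ->
  exists u v, [/\ u != v, 3 <= deg e u & 3 <= deg e v].
Proof.
move=> [sym irr] [u [v [p1 [p2 [p3 [uv /andP [/andP [h1 h2] h3] U /andP [n2 n3]]]]]]].
exists u, v; split => //.
- apply: (@deg_ge3 _ _ _ (head v p1) (head v p2) (head v p3)); last by apply: upath_head.
    + apply: (@uniq3 _ (v :: p1) p2 p3).
        by move: U; rewrite /= => /andP [_].
      * exact: mem_head'.
      * exact: head_in.
      * exact: head_in.
    + exact: upath_head h1.
    + exact: upath_head h2.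
- apply: (@deg_ge3 _ _ _ (last u p1) (last u p2) (last u p3)); last by apply: upath_last.
    + apply: (@uniq3 _ (u :: p1) p2 p3).
        by move: U; rewrite /= !inE negb_or => /and3P [/andP [_ ->] _ ->].
      * exact: mem_last.
      * exact: last_in.
      * exact: last_in.
    + exact: upath_last h1.
    + exact: upath_last h2.
Qed.
Lemma master (n k b m E z D S2 : nat) :
  5 <= n -> k + b + m = n -> k + 2*b + 3*m + E = 2*n+2 -> 2 <= m -> k + b <= z ->
  D = 2 * (k*b + 2*k*m + b*m) + S2 -> 2 * (E * z) <= S2 -> (E = 0 -> S2 = 0) ->
  [/\ 2*n - 4 <= D %/ 2, D %/ 2 = 2*n-4 <-> k = 0,
      1 <= k -> 4*n-10 <= D %/ 2 &
      1 <= k -> (D %/ 2 = 4*n-10 <-> [/\ k = 1, m = 3 & E = 0])].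
Proof.
move=> n5 h1 h2 m2 hz hD hS2 hE0.
have LB : k*b + 2*k*m + b*m + E*z <= D %/ 2.
  rewrite hD; apply: (@leq_trans ((2 * (k*b + 2*k*m + b*m + E*z)) %/ 2)).
    by rewrite mulKn.
  apply: leq_div2r; lia.
have A : 1 <= k -> 4*n - 10 <= k*b + 2*k*m + b*m + E*z by move=> *; nia.
have B : 1 <= k -> k*b + 2*k*m + b*m + E*z <= 4*n - 10 -> [/\ k = 1, m = 3 & E = 0].
  by move=> *; split; nia.
have K0 : k = 0 -> E = 0 /\ m = 2 by move=> *; lia.
have EX : E = 0 -> D %/ 2 = k*b + 2*k*m + b*m.
  by move=> E0; rewrite hD hE0 // addn0 mulKn.
split.
- case: (posnP k) => [k0|kp].
    by have [E0 m2'] := K0 k0; rewrite EX // k0; nia.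
  have := A kp; lia.
- split.
    move=> H; case: (posnP k) => // kp; have := A kp; lia.
  move=> k0; have [E0 m2'] := K0 k0; rewrite EX // k0; nia.
- move=> kp; have := A kp; lia.
- move=> kp; split.
    move=> H; apply: B => //; lia.
  case=> k1 m3 E0; rewrite EX //; nia.
Qed.

Lemma split_pt (a c : nat) :
  maxn a c - minn a c =
  (maxn (minn a 3) (minn c 3) - minn (minn a 3) (minn c 3)) +
  (maxn (a - 3) (c - 3) - minn (a - 3) (c - 3)).
Proof. lia. Qed.

Lemma count_sumI n (a : pred 'I_n) : count a (enum 'I_n) = \sum_(x : 'I_n) (a x : nat).
Proof. by rewrite -sum1_count big_mkcond /= big_enum /=. Qed.

Lemma count_deg n (e : rel 'I_n) (P : pred nat) :
  count P [seq deg e x | x <- enum 'I_n] = \sum_(x : 'I_n) (P (deg e x) : nat).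
Proof. by rewrite count_map count_sumI. Qed.

Lemma geq_props : [/\ total geq, transitive geq & antisymmetric geq].
Proof.
split.
- by move=> a c; rewrite /= leq_total.
- by move=> a c d /= h1 h2; apply: leq_trans h2 h1.
- by move=> a c /= /andP [h1 h2]; apply/eqP; rewrite eqn_leq h1 h2.
Qed.

Lemma path_nseq2 x k : 2 <= x -> path geq x (nseq k 2 ++ [:: 1]).
Proof.
elim: k x => [|k IH] x hx /=; first by rewrite andbT; lia.
by rewrite hx IH.
Qed.

Lemma path_nseq2' x k : 2 <= x -> path geq x (nseq k 2).
Proof. elim: k x => [|k IH] x hx //=; by rewrite hx IH. Qed.

Lemma degseq_eq n (e : rel 'I_n) (L : seq nat) :
  sorted geq L ->
  (forall P : pred nat, \sum_(x : 'I_n) (P (deg e x) : nat) = count P L) ->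
  degseq e = L.
Proof.
move=> sL H; have [tot tr anti] := geq_props.
rewrite /degseq -(sorted_sort tr sL); apply/(perm_sortP tot tr anti).
by apply/permP => P; rewrite count_deg H.
Qed.

Theorem theorem14 (n : nat) (e : rel 'I_n) :
  5 <= n -> in_Theta e ->
  (2 * n - 4 <= irr_t e /\
   (irr_t e = 2 * n - 4 <-> degseq e = [:: 3; 3] ++ nseq (n - 2) 2)) /\
  (degseq e <> [:: 3; 3] ++ nseq (n - 2) 2 ->
   4 * n - 10 <= irr_t e /\
   (irr_t e = 4 * n - 10 <->
    degseq e = [:: 3; 3; 3] ++ nseq (n - 4) 2 ++ [:: 1])).
Proof.
move=> n5 [[sg [con ne]] th].
set d := deg e.
pose t := fun x => minn (d x) 3.
pose g := fun x => d x - 3.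
have d1 : forall y, 1 <= d y by move=> y; apply: deg_ge1 => //; lia.
have t13 : forall y, 1 <= t y <= 3 by move=> y; have := d1 y; rewrite /t; lia.
set k := cnt t 1. set b := cnt t 2. set m := cnt t 3.
set E := \sum_(y : 'I_n) g y.
set z := cnt g 0.
have hD : \sum_(x : 'I_n) \sum_(y : 'I_n) (maxn (d x) (d y) - minn (d x) (d y)) =
   2 * (k*b + 2*k*m + b*m) +
   \sum_(x : 'I_n) \sum_(y : 'I_n) (maxn (g x) (g y) - minn (g x) (g y)).
  rewrite -S1_val // -big_split /=; apply: eq_bigr => x _.
  rewrite -big_split /=; apply: eq_bigr => y _; exact: split_pt.
have hkbm : k + b + m = n.
  have := L3 (fun _ => 1) t13; rewrite /= !mul1n sum_nat_const card_ord muln1.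
  by move=> ->.
have hsum : k + 2*b + 3*m + E = 2*n+2.
  have := handshake sg; rewrite ne.
  rewrite (eq_bigr (fun x => t x + g x)); last by move=> x _; rewrite /t /g /d; lia.
  rewrite big_split /= (L3 id t13) /= mul1n.
  rewrite -/d -/k -/b -/m -/E => ->; lia.
have hm : 2 <= m.
  have [u [v [uv du dv]]] := theta_deg sg th.
  rewrite /m /cnt (bigD1 u) // (bigD1 v) /=; last by rewrite eq_sym.
  have -> : t u = 3 by rewrite /t; move: du; rewrite -/d; lia.
  have -> : t v = 3 by rewrite /t; move: dv; rewrite -/d; lia.
  by rewrite eqxx /=; lia.
have hz : k + b <= z.
  rewrite /k /b /z /cnt -big_split /=; apply: leq_sum => y _.
  rewrite /t /g; case: (d y) => [|[|[|[|q]]]] //=.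
have [M1 M2 M3 M4] := master n5 hkbm hsum hm hz hD (S2_ge g) (@S2_0 _ g).
have tdeq : forall (i : nat), 1 <= i <= 2 -> forall y, (t y == i) = (d y == i).
  move=> i hi y; rewrite /t; case: (d y) => [|[|[|[|q]]]] /=; case: i hi => [|[|[|?]]] //.
have dseq : forall P : pred nat, count P (degseq e) = \sum_(x : 'I_n) (P (d x) : nat).
  by move=> P; rewrite /degseq count_sort count_deg.
have kE : k = count (pred1 1) (degseq e).
  rewrite dseq /k /cnt; apply: eq_bigr => y _; by rewrite /= (tdeq 1).
have bE : b = count (pred1 2) (degseq e).
  rewrite dseq /b /cnt; apply: eq_bigr => y _; by rewrite /= (tdeq 2).
have E0P : E = 0 -> forall P : pred nat,
    \sum_(x : 'I_n) (P (d x) : nat) = P 1 * k + P 2 * b + P 3 * m.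
  move=> E0 P.
  have g0 : forall y, g y = 0 by move=> y; have := sum_ge_pt g y; rewrite -/E E0; lia.
  rewrite (eq_bigr (fun x => P (t x) : nat)); first exact: (L3 (fun v => (P v : nat)) t13).
  move=> x _; congr (nat_of_bool (P _)); have := g0 x; rewrite /t /g; lia.
have EA : degseq e = [:: 3; 3] ++ nseq (n - 2) 2 <-> k = 0.
  split.
    by move=> H; rewrite kE H count_cat count_nseq.
  move=> k0; have E0 : E = 0 by lia.
  have m2 : m = 2 by lia.
  apply: degseq_eq.
    by rewrite /= path_nseq2'.
  move=> P; rewrite E0P // count_cat count_nseq /=.
  case: (P 1); case: (P 2); case: (P 3) => /=; lia.
have EB : degseq e = [:: 3; 3; 3] ++ nseq (n - 4) 2 ++ [:: 1] <-> [/\ k = 1, m = 3 & E = 0].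
  split.
    move=> H; have k1 : k = 1 by rewrite kE H !count_cat count_nseq.
    have b4 : b = n - 4 by rewrite bE H !count_cat count_nseq /=; lia.
    split => //; lia.
  case=> k1 m3 E0.
  have b4 : b = n - 4 by lia.
  apply: degseq_eq.
    by rewrite /= path_nseq2.
  move=> P; rewrite E0P // !count_cat count_nseq /=.
  case: (P 1); case: (P 2); case: (P 3) => /=; lia.
have irrE : irr_t e = (\sum_(x : 'I_n) \sum_(y : 'I_n) (maxn (d x) (d y) - minn (d x) (d y))) %/ 2.
  by [].
rewrite irrE.
split; first split => //.
  by rewrite EA.
move=> nA; have kp : 1 <= k.
  by case: (posnP k) => // k0; exfalso; apply: nA; rewrite EA.
split; first exact: M3.
by rewrite EB; apply: M4.
Qed.
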